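(* Let $\mathsf{X}$ be a real Hilbert space with norm $\|\cdot\|$, let $\mathcal{H}\subset\mathsf{X}$ be a closed linear subspace, and let $\mathcal{M}\subset\mathsf{X}$ be a closed subset that is closed with respect to scalar multiplication ($z\in\mathcal{M}\Rightarrow \alpha z\in\mathcal{M}$ for all real $\alpha$). Assume every point of $\mathsf{X}$ has at least one closest point in $\mathcal{M}$, and let $\Pi_{\mathcal{M}}$ be a map assigning to each point one such closest point; let $\Pi_{\mathcal{H}}$ be the orthogonal projection onto $\mathcal{H}$. For $x\in\mathsf{X}$ define $y_0=x$ and $y_{k+1}=\Pi_{\mathcal{H}}\Pi_{\mathcal{M}}y_k$ for $k\ge 0$. Then: 1. $\|y_k-\Pi_{\mathcal{M}}y_k\|\to0$ and $\|\Pi_{\mathcal{M}}y_k-y_{k+1}\|\to 0$ as $k\to\infty$. 2. If moreover $\mathcal{M}\cap B_1$ is compact, where $B_1=\{z\in\mathsf{X}:\|z\|\le1\}$, then there is a subsequence $(y_{i_k})$ of $(y_k)$ converging to a point $y^*\in\mathcal{M}\cap\mathcal{H}$. *)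

(* Defs.v *)
From Stdlib Require Import Reals List.
Open Scope R_scope.

Record HilbertSpace := {
  hcarrier :> Type;
  hzero : hcarrier;
  hadd : hcarrier -> hcarrier -> hcarrier;
  hopp : hcarrier -> hcarrier;
  hscal : R -> hcarrier -> hcarrier;
  hinner : hcarrier -> hcarrier -> R;
  hadd_assoc : forall x y z, hadd x (hadd y z) = hadd (hadd x y) z;
  hadd_comm : forall x y, hadd x y = hadd y x;
  hadd_zero : forall x, hadd x hzero = x;
  hadd_opp : forall x, hadd x (hopp x) = hzero;
  hscal_one : forall x, hscal 1 x = x;
  hscal_assoc : forall a b x, hscal a (hscal b x) = hscal (a * b) x;
  hscal_distr_l : forall a x y, hscal a (hadd x y) = hadd (hscal a x) (hscal a y);
  hscal_distr_r : forall a b x, hscal (a + b) x = hadd (hscal a x) (hscal b x);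
  hinner_sym : forall x y, hinner x y = hinner y x;
  hinner_add : forall x y z, hinner (hadd x y) z = hinner x z + hinner y z;
  hinner_scal : forall a x y, hinner (hscal a x) y = a * hinner x y;
  hinner_pos : forall x, 0 <= hinner x x;
  hinner_def : forall x, hinner x x = 0 -> x = hzero;
  hcomplete : forall u : nat -> hcarrier,
    (forall eps, eps > 0 -> exists N, forall n m, (n >= N)%nat -> (m >= N)%nat ->
       sqrt (hinner (hadd (u n) (hopp (u m))) (hadd (u n) (hopp (u m)))) < eps) ->
    exists l, forall eps, eps > 0 -> exists N, forall n, (n >= N)%nat ->
       sqrt (hinner (hadd (u n) (hopp l)) (hadd (u n) (hopp l))) < eps
}.

Arguments hzero {h}.
Arguments hadd {h} _ _.
Arguments hopp {h} _.
Arguments hscal {h} _ _.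
Arguments hinner {h} _ _.

Section HDefs.
Context {X : HilbertSpace}.

Definition hsub (x y : X) : X := hadd x (hopp y).
Definition hnorm (x : X) : R := sqrt (hinner x x).

Definition hconverges (u : nat -> X) (l : X) : Prop :=
  forall eps, eps > 0 -> exists N, forall n, (n >= N)%nat -> hnorm (hsub (u n) l) < eps.

Definition hopen (U : X -> Prop) : Prop :=
  forall x, U x -> exists eps, eps > 0 /\ forall z, hnorm (hsub z x) < eps -> U z.

Definition hclosed (S : X -> Prop) : Prop := hopen (fun x => ~ S x).

Definition hcompact (K : X -> Prop) : Prop :=
  forall (I : Type) (U : I -> X -> Prop),
    (forall i, hopen (U i)) ->
    (forall x, K x -> exists i, U i x) ->
    exists l : list I, forall x, K x -> exists i, In i l /\ U i x.

Definition closed_subspace (H : X -> Prop) : Prop :=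
  H hzero /\ (forall x y, H x -> H y -> H (hadd x y)) /\
  (forall a x, H x -> H (hscal a x)) /\ hclosed H.

Definition is_orth_proj (H : X -> Prop) (PH : X -> X) : Prop :=
  forall x, H (PH x) /\ forall h, H h -> hinner (hsub x (PH x)) h = 0.

Definition is_nearest_selection (M : X -> Prop) (PM : X -> X) : Prop :=
  forall x, M (PM x) /\ forall z, M z -> hnorm (hsub x (PM x)) <= hnorm (hsub x z).

Definition alt_proj_seq (PH PM : X -> X) (x : X) (k : nat) : X :=
  Nat.iter k (fun v => PH (PM v)) x.

End HDefs.

(* Main.v *)
Require Import Defs.
From Stdlib Require Import Reals Lra Psatz List Classical ClassicalEpsilon.
Open Scope R_scope.

Section Basics.
Context {X : HilbertSpace}.

Lemma ip0l (y : X) : hinner hzero y = 0.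
Proof. pose proof (hinner_add X hzero hzero y). rewrite hadd_zero in H. lra. Qed.

Lemma ipDl (x y z : X) : hinner (hadd x y) z = hinner x z + hinner y z.
Proof. apply hinner_add. Qed.
Lemma ipDr (x y z : X) : hinner z (hadd x y) = hinner z x + hinner z y.
Proof. rewrite hinner_sym, ipDl, (hinner_sym X x), (hinner_sym X y). reflexivity. Qed.
Lemma ipNl (x y : X) : hinner (hopp x) y = - hinner x y.
Proof. pose proof (hinner_add X x (hopp x) y). rewrite hadd_opp, ip0l in H. lra. Qed.
Lemma ipNr (x y : X) : hinner y (hopp x) = - hinner y x.
Proof. rewrite hinner_sym, ipNl, hinner_sym. reflexivity. Qed.
Lemma ipZl a (x y : X) : hinner (hscal a x) y = a * hinner x y.
Proof. apply hinner_scal. Qed.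
Lemma ipZr a (x y : X) : hinner y (hscal a x) = a * hinner y x.
Proof. rewrite hinner_sym, ipZl, hinner_sym. reflexivity. Qed.
Lemma ip0r (y : X) : hinner y hzero = 0.
Proof. rewrite hinner_sym; apply ip0l. Qed.

Ltac ipexp := unfold hsub; repeat (first [rewrite ipDl | rewrite ipDr | rewrite ipNl
  | rewrite ipNr | rewrite ipZl | rewrite ipZr]).

Lemma sym (x y : X) : hinner x y = hinner y x.
Proof. apply hinner_sym. Qed.

Lemma hn_ge0 (x : X) : 0 <= hnorm x.
Proof. apply sqrt_pos. Qed.
Lemma hn_sq (x : X) : hnorm x * hnorm x = hinner x x.
Proof. apply sqrt_sqrt, hinner_pos. Qed.

Lemma CS (x y : X) : hinner x y <= hnorm x * hnorm y.
Proof.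
  assert (Hb : hinner x y * hinner x y <= hinner x x * hinner y y).
  { destruct (hinner_pos X y) as [Hc|Hc].
    - pose proof (hinner_pos X (hadd x (hscal (- hinner x y / hinner y y) y))) as P.
      revert P. ipexp. try rewrite (sym y x).
      set (A := hinner x x) in *. set (B := hinner x y) in *. set (C := hinner y y) in *.
      intro P.
      assert (E: A + - B / C * B + (- B / C * B + - B / C * (- B / C * C)) = A - B*B/C) by (field; lra).
      rewrite E in P. apply Rmult_le_compat_r with (r := C) in P; [|lra].
      replace ((A - B*B/C)*C) with (A*C - B*B) in P by (field; lra). lra.
    - symmetry in Hc. apply hinner_def in Hc. subst y. rewrite !ip0r. lra. }
  pose proof (hn_sq x). pose proof (hn_sq y). pose proof (hn_ge0 x). pose proof (hn_ge0 y).
  assert (Hs : (hnorm x * hnorm y) * (hnorm x * hnorm y) = hinner x x * hinner y y).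
  { rewrite <- (hn_sq x), <- (hn_sq y). ring. }
  destruct (Rle_or_lt (hinner x y) (hnorm x * hnorm y)) as [|Hlt]; auto.
  assert (0 <= hnorm x * hnorm y) by (apply Rmult_le_pos; auto).
  assert ((hnorm x * hnorm y) * (hnorm x * hnorm y) < hinner x y * hinner x y).
  { apply Rmult_le_0_lt_compat; auto. }
  lra.
Qed.

Lemma tri (a b c : X) : hnorm (hsub a c) <= hnorm (hsub a b) + hnorm (hsub b c).
Proof.
  assert (E : hinner (hsub a c) (hsub a c) = hinner (hsub a b) (hsub a b)
     + 2 * hinner (hsub a b) (hsub b c) + hinner (hsub b c) (hsub b c)).
  { ipexp. rewrite (sym b a), (sym c a), (sym c b). lra. }
  pose proof (CS (hsub a b) (hsub b c)).
  pose proof (hn_sq (hsub a c)). pose proof (hn_sq (hsub a b)). pose proof (hn_sq (hsub b c)).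
  pose proof (hn_ge0 (hsub a c)). pose proof (hn_ge0 (hsub a b)). pose proof (hn_ge0 (hsub b c)).
  nra.
Qed.

Lemma nsym (a b : X) : hnorm (hsub a b) = hnorm (hsub b a).
Proof. unfold hnorm. f_equal. ipexp. rewrite (sym b a). lra. Qed.

Lemma nself (a : X) : hnorm (hsub a a) = 0.
Proof. unfold hnorm. replace (hinner (hsub a a) (hsub a a)) with 0. apply sqrt_0. ipexp. lra. Qed.

Lemma nscal c (a b : X) : 0 <= c -> hnorm (hsub (hscal c a) (hscal c b)) = c * hnorm (hsub a b).
Proof.
  intro Hc. unfold hnorm.
  replace (hinner (hsub (hscal c a) (hscal c b)) (hsub (hscal c a) (hscal c b)))
    with ((c*c) * hinner (hsub a b) (hsub a b)).
  - rewrite sqrt_mult, sqrt_square; auto. nra. apply hinner_pos.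
  - ipexp. ring.
Qed.


Lemma sqle (a b : X) : hnorm a <= hnorm b -> hinner a a <= hinner b b.
Proof. intro H. apply sqrt_le_0; auto; apply hinner_pos. Qed.

Lemma cone_pyth (M : X -> Prop) PM (y : X) :
  (forall (a : R) (z : X), M z -> M (hscal a z)) -> is_nearest_selection M PM ->
  hinner y y = hinner (hsub y (PM y)) (hsub y (PM y)) + hinner (PM y) (PM y).
Proof.
  intros Hs Hn. set (z := PM y).
  destruct (Hn y) as [Mz Hmin]. fold z in Mz, Hmin.
  set (A := hinner y y). set (B := hinner y z). set (C := hinner z z).
  assert (C0 : 0 <= C) by apply hinner_pos.
  set (s := (B - C) / (C + 1)).
  pose proof (sqle _ _ (Hmin _ (Hs (1 + s) z Mz))) as P. revert P. ipexp.
  rewrite (sym z y). fold A B C. intro P.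
  assert (E : (C+1)*(C+1) * (A + - (1 + s) * B + (- ((1 + s) * B) + - (1 + s) * - ((1 + s) * C)) - (A + - B + (- B + - - C))) = - ((B - C) * (B - C)) * (C + 2)).
  { unfold s. field. lra. }
  assert (Q : 0 <= (C+1)*(C+1) * (A + - (1 + s) * B + (- ((1 + s) * B) + - (1 + s) * - ((1 + s) * C)) - (A + - B + (- B + - - C)))).
  { apply Rmult_le_pos; nra. }
  rewrite E in Q.
  assert (D: (B-C)*(B-C)*(C+2) <= 0) by lra.
  assert (D2: (B-C)*(B-C) <= 0).
  { apply Rmult_le_reg_r with (C+2); lra. }
  assert (B = C) by nra.
  ipexp. try rewrite (sym z y). fold A B C. lra.
Qed.

Lemma proj_pyth (H : X -> Prop) PH (z : X) : is_orth_proj H PH ->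
  hinner z z = hinner (hsub z (PH z)) (hsub z (PH z)) + hinner (PH z) (PH z).
Proof.
  intros Hp. destruct (Hp z) as [Hz Ho]. specialize (Ho _ Hz). revert Ho. ipexp.
  rewrite (sym (PH z) z). lra.
Qed.


Lemma closed_lim (S : X -> Prop) (u : nat -> X) l :
  hclosed S -> (forall n, S (u n)) -> hconverges u l -> S l.
Proof.
  intros Hc Hu Hl. apply NNPP. intro Hn. destruct (Hc l Hn) as [e [He Hb]].
  destruct (Hl e He) as [N HN]. apply (Hb (u N)); auto.
Qed.

Lemma fold_max_ge (f : X -> nat) (l : list X) i m :
  In i l -> (f i <= fold_right (fun a b => Nat.max (f a) b) m l)%nat.
Proof.
  induction l; simpl; intros H; [contradiction|].
  destruct H as [<-|H]; [lia|]. specialize (IHl H). lia.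
Qed.

Lemma cluster (K : X -> Prop) (u : nat -> X) :
  hcompact K -> (forall n, K (u n)) ->
  exists p, K p /\ forall e, e > 0 -> forall N, exists n, (n >= N)%nat /\ hnorm (hsub (u n) p) < e.
Proof.
  intros Hk Hu. apply NNPP. intro Hno.
  assert (Hall : forall p, exists eN : R * nat, fst eN > 0 /\
     (K p -> forall n, (n >= snd eN)%nat -> hnorm (hsub (u n) p) >= fst eN)).
  { intro p. destruct (classic (K p)) as [Kp|Kp].
    - apply NNPP; intro C. apply Hno. exists p. split; auto.
      intros e He N. apply NNPP; intro C2. apply C. exists (e, N). simpl. split; auto.
      intros _ n Hn. apply Rnot_lt_ge. intro Hlt. apply C2. exists n; auto.
    - exists (1, 0%nat). simpl. split; [lra|]. tauto. }
  set (g := fun p => proj1_sig (constructive_indefinite_description _ (Hall p))).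
  assert (Hg : forall p, fst (g p) > 0 /\
     (K p -> forall n, (n >= snd (g p))%nat -> hnorm (hsub (u n) p) >= fst (g p))).
  { intro p. exact (proj2_sig (constructive_indefinite_description _ (Hall p))). }
  destruct (Hk X (fun p z => K p /\ hnorm (hsub z p) < fst (g p))) as [l Hl].
  - intros p z [Kp Hz]. exists (fst (g p) - hnorm (hsub z p)). split; [lra|].
    intros w Hw. split; auto. pose proof (tri w z p). lra.
  - intros x Kx. exists x. split; auto. rewrite nself. apply (proj1 (Hg x)).
  - set (N := fold_right (fun a b => Nat.max (snd (g a)) b) 0%nat l).
    destruct (Hl (u N) (Hu N)) as [i [Hi [Ki Hd]]].
    pose proof (fold_max_ge (fun a => snd (g a)) l i 0%nat Hi) as HN. fold N in HN.
    pose proof (proj2 (Hg i) Ki N HN). lra.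
Qed.

Lemma seqcomp (K : X -> Prop) (u : nat -> X) :
  hcompact K -> (forall n, K (u n)) ->
  exists (phi : nat -> nat) p, (forall k, (phi k < phi (S k))%nat) /\ K p /\
     hconverges (fun k => u (phi k)) p.
Proof.
  intros Hk Hu. destruct (cluster K u Hk Hu) as [p [Kp Hp]].
  assert (Hall : forall k m, exists n, (n > m)%nat /\ hnorm (hsub (u n) p) < / INR (S k)).
  { intros k m. destruct (Hp (/ INR (S k))) with (N := S m) as [n [Hn1 Hn2]].
    - apply Rlt_gt, Rinv_0_lt_compat, lt_0_INR. lia.
    - exists n. split; auto. }
  set (g := fun k m => proj1_sig (constructive_indefinite_description _ (Hall k m))).
  assert (Hg : forall k m, (g k m > m)%nat /\ hnorm (hsub (u (g k m)) p) < / INR (S k)).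
  { intros k m. exact (proj2_sig (constructive_indefinite_description _ (Hall k m))). }
  set (phi := fix f k := match k with O => g O O | S k' => g (S k') (f k') end).
  assert (Hphi : forall k, hnorm (hsub (u (phi k)) p) < / INR (S k)).
  { intros [|k]; simpl; apply Hg. }
  exists phi, p. split; [|split; auto].
  - intro k. simpl. apply (proj1 (Hg _ _)).
  - intros e He. destruct (archimed_cor1 e He) as [N [HN HN0]].
    exists N. intros n Hn. eapply Rlt_le_trans; [apply Hphi|].
    apply Rlt_le. eapply Rle_lt_trans; [|apply HN].
    apply Rinv_le_contravar; [apply lt_0_INR; lia| apply le_INR; lia].
Qed.


Lemma tele (a d : nat -> R) : (forall n, 0 <= d n) -> (forall n, d n <= a n - a (S n)) ->
  (forall n, 0 <= a n) -> Un_cv (fun n => sqrt (d n)) 0.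
Proof.
  intros Hd Hda Ha.
  assert (Dec : Un_decreasing a) by (intro n; specialize (Hda n); specialize (Hd n); lra).
  assert (Lb : has_lb a).
  { exists 0. intros x [i ->]. unfold opp_seq. specialize (Ha i). lra. }
  destruct (decreasing_cv a Dec Lb) as [L HL].
  pose proof (decreasing_ineq a L Dec HL) as HLe.
  intros eps He. destruct (HL (eps*eps)) as [N HN]; [nra|].
  exists N. intros n Hn. specialize (HN n Hn). unfold Rdist in *.
  rewrite Rminus_0_r, Rabs_right by (apply Rle_ge, sqrt_pos).
  rewrite <- (sqrt_square eps) by lra.
  apply sqrt_lt_1; [auto|nra|].
  specialize (HLe (S n)). specialize (Hda n).
  pose proof (decreasing_ineq a L Dec HL n).
  rewrite Rabs_right in HN by lra.
  lra.
Qed.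

End Basics.

Theorem theorem1 (X : HilbertSpace) (H M : X -> Prop) (PH PM : X -> X) (x : X)
  (hH : closed_subspace H)
  (hMcl : hclosed M)
  (hMscal : forall (a : R) (z : X), M z -> M (hscal a z))
  (hPM : is_nearest_selection M PM)
  (hPH : is_orth_proj H PH) :
  let y := alt_proj_seq PH PM x in
  (Un_cv (fun k => hnorm (hsub (y k) (PM (y k)))) 0 /\
   Un_cv (fun k => hnorm (hsub (PM (y k)) (y (S k)))) 0) /\
  (hcompact (fun z => M z /\ hnorm z <= 1) ->
   exists (phi : nat -> nat) (ystar : X),
     (forall k, (phi k < phi (S k))%nat) /\
     M ystar /\ H ystar /\ hconverges (fun k => y (phi k)) ystar).
Proof.
  intros y.
  assert (Hy : forall k, y (S k) = PH (PM (y k))) by reflexivity.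
  assert (Key : forall k, hinner (y k) (y k) = hinner (hsub (y k) (PM (y k))) (hsub (y k) (PM (y k)))
     + hinner (hsub (PM (y k)) (y (S k))) (hsub (PM (y k)) (y (S k))) + hinner (y (S k)) (y (S k))).
  { intro k. rewrite Hy. pose proof (cone_pyth M PM (y k) hMscal hPM).
    pose proof (proj_pyth H PH (PM (y k)) hPH). lra. }
  assert (P1 : Un_cv (fun k => hnorm (hsub (y k) (PM (y k)))) 0).
  { apply (tele (fun k => hinner (y k) (y k))); intros; try apply hinner_pos.
    rewrite (Key n). pose proof (hinner_pos X (hsub (PM (y n)) (y (S n)))). lra. }
  assert (P2 : Un_cv (fun k => hnorm (hsub (PM (y k)) (y (S k)))) 0).
  { apply (tele (fun k => hinner (y k) (y k))); intros; try apply hinner_pos.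
    rewrite (Key n). pose proof (hinner_pos X (hsub (y n) (PM (y n)))). lra. }
  split; [split; auto|].
  intro Hc.
  set (c := hnorm x + 1).
  assert (Hc0 : 0 < c) by (pose proof (hn_ge0 x); unfold c; lra).
  assert (Ha : forall k, hinner (y k) (y k) <= hinner x x).
  { induction k; [simpl; lra|]. rewrite (Key k) in IHk.
    pose proof (hinner_pos X (hsub (PM (y k)) (y (S k)))).
    pose proof (hinner_pos X (hsub (y k) (PM (y k)))). lra. }
  assert (Hz : forall k, hinner (PM (y k)) (PM (y k)) <= hinner x x).
  { intro k. pose proof (cone_pyth M PM (y k) hMscal hPM).
    pose proof (hinner_pos X (hsub (y k) (PM (y k)))). specialize (Ha k). lra. }
  set (w := fun k => hscal (/ c) (PM (y k))).
  assert (Kw : forall k, M (w k) /\ hnorm (w k) <= 1).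
  { intro k. split; [apply hMscal, hPM|].
    unfold hnorm, w. rewrite <- sqrt_1. apply sqrt_le_1; [apply hinner_pos|lra|].
    rewrite ipZl, ipZr. specialize (Hz k).
    assert (hinner x x <= c * c).
    { rewrite <- hn_sq. pose proof (hn_ge0 x). unfold c. nra. }
    assert (Hp : 0 <= hinner (PM (y k)) (PM (y k))) by apply hinner_pos.
    assert (hinner (PM (y k)) (PM (y k)) <= c * c) by lra.
    replace (/ c * (/ c * hinner (PM (y k)) (PM (y k)))) with (hinner (PM (y k)) (PM (y k)) / (c*c))
      by (field; lra).
    apply Rmult_le_reg_r with (c*c); [nra|].
    unfold Rdiv. rewrite Rmult_assoc, Rinv_l by nra. lra. }
  destruct (seqcomp _ w Hc Kw) as [phi [p [Hinc [[Mp _] Hconv]]]].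
  set (ystar := hscal c p).
  assert (Hphi : forall k, (k <= phi k)%nat).
  { induction k; [lia|]. specialize (Hinc k). lia. }
  assert (HzC : hconverges (fun k => PM (y (phi k))) ystar).
  { intros e He. destruct (Hconv (e / c)) as [N HN].
    { apply Rlt_gt. apply Rdiv_lt_0_compat; lra. }
    exists N. intros n Hn. specialize (HN n Hn). simpl in HN.
    replace (PM (y (phi n))) with (hscal c (w (phi n))).
    - unfold ystar. rewrite nscal by lra.
      apply Rmult_lt_compat_l with (r := c) in HN; [|lra].
      replace (c * (e / c)) with e in HN by (field; lra). lra.
    - unfold w. rewrite hscal_assoc, Rinv_r, hscal_one by lra. reflexivity. }
  exists phi, ystar. split; [auto|]. split; [apply hMscal; auto|].
  split.
  - apply (closed_lim H (fun k => y (S (phi k)))).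
    + apply hH.
    + intro n. rewrite Hy. apply hPH.
    + intros e He. destruct (P2 (e/2)) as [N1 HN1]; [lra|].
      destruct (HzC (e/2)) as [N2 HN2]; [lra|].
      exists (Nat.max N1 N2). intros n Hn.
      specialize (HN1 (phi n) ltac:(specialize (Hphi n); lia)).
      specialize (HN2 n ltac:(lia)). simpl in HN2.
      unfold Rdist in HN1. rewrite Rminus_0_r, Rabs_right in HN1 by apply Rle_ge, hn_ge0.
      pose proof (tri (y (S (phi n))) (PM (y (phi n))) ystar).
      rewrite (nsym (y (S (phi n))) (PM (y (phi n)))) in H0. lra.
  - intros e He. destruct (P1 (e/2)) as [N1 HN1]; [lra|].
    destruct (HzC (e/2)) as [N2 HN2]; [lra|].
    exists (Nat.max N1 N2). intros n Hn.
    specialize (HN1 (phi n) ltac:(specialize (Hphi n); lia)).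
    specialize (HN2 n ltac:(lia)). simpl in HN2.
    unfold Rdist in HN1. rewrite Rminus_0_r, Rabs_right in HN1 by apply Rle_ge, hn_ge0.
    pose proof (tri (y (phi n)) (PM (y (phi n))) ystar). lra.
Qed.
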